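(* Let $X$ and $Y$ be two configurations of the same polygonal chain (open or closed), each bar of which carries a symmetric slender adornment with that bar as base, and suppose the configuration $Y$ of the base chain is an expansion of the configuration $X$. If the adornments attached to the bars of $X$ pairwise do not overlap, then the corresponding adornments attached to the bars of $Y$ also pairwise do not overlap.
   Context: An adornment is a compact simply connected region $S\subset\mathbb{R}^2$ together with a segment $[x,y]$, $x\ne y$, with endpoints on the boundary of $S$ and $[x,y]\subseteq S$ (the base); its boundary consists of two arcs from $x$ to $y$ (the sides). It is slender if, for a point $p$ moving along either side from $x$ to $y$, $\|p-x\|$ is nondecreasing and $\|p-y\|$ is nonincreasing; it is symmetric if invariant under reflection in the line through $x,y$. A polygonal chain consists of vertices $v_0,\dots,v_n$ and bars $[v_{i-1},v_i]$ (for a closed chain also a bar $[v_n,v_0]$); a configuration assigns positions to the vertices preserving bar lengths. An adornment attached to a bar is carried to another configuration by the rigid motion taking the bar to its new position. Points of the chain in two configurations correspond via these rigid motions of the bars. Configuration $Y$ is an expansion of configuration $X$ if for any two points $p,q$ of the chain in $X$, the corresponding points $p',q'$ in $Y$ satisfy $\|p'-q'\|\ge\|p-q\|$. Two adornments (on different bars) overlap if some point of one lies in the interior of the other; touching along boundaries is allowed. *)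

(* Defs.v *)
(* Points of the plane are pairs (R * R) over an
   abstract real type, with the product (= Euclidean) topology; distances are
   Euclidean. *)
From HB Require Import structures.
From mathcomp Require Import all_boot all_order all_algebra.
From mathcomp Require Import all_classical all_reals all_analysis.
Set Implicit Arguments.
Unset Strict Implicit.
Unset Printing Implicit Defensive.
Import Order.TTheory GRing.Theory Num.Theory.
Import numFieldNormedType.Exports.
Local Open Scope classical_set_scope.
Local Open Scope ring_scope.

Section Plane.
Variable R : realType.

Definition pt := (R * R)%type.

Definition edist (p q : pt) : R :=
  Num.sqrt ((p.1 - q.1) ^+ 2 + (p.2 - q.2) ^+ 2).

Definition lerp (a b : pt) (t : R) : pt :=
  ((1 - t) * a.1 + t * b.1, (1 - t) * a.2 + t * b.2).

Definition unit01 : set R := `[0, 1]%classic.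

Definition segment (a b : pt) : set pt := [set lerp a b t | t in unit01].

Definition boundary (S : set pt) : set pt := closure S `\` interior S.

Definition simply_connected (S : set pt) : Prop :=
  [/\ S !=set0,
      (forall a b, S a -> S b -> exists g : R -> pt,
          [/\ {within unit01, continuous g}, g 0 = a, g 1 = b &
              g @` unit01 `<=` S]) &
      (forall g : R -> pt, {within unit01, continuous g} ->
          g @` unit01 `<=` S -> g 0 = g 1 ->
          exists H : R * R -> pt,
            [/\ {within unit01 `*` unit01, continuous H},
                H @` (unit01 `*` unit01) `<=` S,
                (forall s, unit01 s -> H (s, 0) = g s),
                (forall s, unit01 s -> H (s, 1) = g 0) &
                (forall t, unit01 t -> H (0, t) = g 0 /\ H (1, t) = g 0)])].

Definition arc_from_to (g : R -> pt) (a b : pt) : Prop :=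
  [/\ {within unit01, continuous g}, {in unit01 &, injective g},
      g 0 = a & g 1 = b].

Definition adornment_with_sides (S : set pt) (x y : pt) (g1 g2 : R -> pt) :=
  [/\ compact S /\ simply_connected S /\ x != y,
      boundary S x /\ boundary S y,
      segment x y `<=` S,
      arc_from_to g1 x y /\ arc_from_to g2 x y &
      boundary S = g1 @` unit01 `|` g2 @` unit01].

Definition slender_side (g : R -> pt) (x y : pt) : Prop :=
  forall s t, unit01 s -> unit01 t -> s <= t ->
    edist (g s) x <= edist (g t) x /\ edist (g t) y <= edist (g s) y.

Definition reflect_line (x y p : pt) : pt :=
  let d := (y.1 - x.1, y.2 - x.2) in
  let c := ((p.1 - x.1) * d.1 + (p.2 - x.2) * d.2) / (d.1 ^+ 2 + d.2 ^+ 2) in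
  let q := (x.1 + c * d.1, x.2 + c * d.2) in
  (2 * q.1 - p.1, 2 * q.2 - p.2).

Definition symmetric_set (S : set pt) (x y : pt) : Prop :=
  forall p, S p <-> S (reflect_line x y p).

Definition sym_slender_adornment (S : set pt) (x y : pt) : Prop :=
  (exists g1 g2, adornment_with_sides S x y g1 g2 /\
                 slender_side g1 x y /\ slender_side g2 x y) /\
  symmetric_set S x y.

Definition overlap (A B : set pt) : Prop :=
  exists p, (A p /\ interior B p) \/ (B p /\ interior A p).

Definition plane_isometry (f : pt -> pt) : Prop :=
  forall p q, edist (f p) (f q) = edist p q.

End Plane.

(* Polygonal chains with vertices v_0, ..., v_n (indexed by 'I_n.+1).
   Bar i (for i : 'I_n.+1) joins v_i and v_(i+1 mod n+1); it is a bar of the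
   chain iff i < n (open chain) or always (closed chain, last bar [v_n, v_0]). *)
Definition is_bar (closed : bool) (n : nat) (i : 'I_n.+1) : bool :=
  closed || (i < n)%N.

Definition bar_end (n : nat) (i : 'I_n.+1) : 'I_n.+1 := ordS i.

Definition chain_point (R : realType) (n : nat) (V : 'I_n.+1 -> pt R)
  (i : 'I_n.+1) (t : R) : pt R := lerp (V i) (V (bar_end i)) t.

Definition same_chain (R : realType) (closed : bool) (n : nat)
  (X Y : 'I_n.+1 -> pt R) : Prop :=
  forall i, is_bar closed i ->
    edist (Y i) (Y (bar_end i)) = edist (X i) (X (bar_end i)).

Definition expansion (R : realType) (closed : bool) (n : nat)
  (X Y : 'I_n.+1 -> pt R) : Prop :=
  forall i j, is_bar closed i -> is_bar closed j ->
  forall s t, unit01 s -> unit01 t ->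
    edist (chain_point X i s) (chain_point X j t)
      <= edist (chain_point Y i s) (chain_point Y j t).

(* Main.v *)
Require Import Defs.
From HB Require Import structures.
From mathcomp Require Import all_boot all_order all_algebra.
From mathcomp Require Import all_classical all_reals all_analysis.
From mathcomp Require Import ring lra.
Import Order.TTheory GRing.Theory Num.Theory.
Import numFieldNormedType.Exports.
Local Open Scope classical_set_scope.
Local Open Scope ring_scope.
Set Implicit Arguments.
Unset Strict Implicit.
Section Alg.
Variable R : realType.
Implicit Types p q x y z w : pt R.
Definition sqd p q : R := (p.1 - q.1)^+2 + (p.2 - q.2)^+2.

Lemma sqd_ge0 p q : 0 <= sqd p q.
Proof. by rewrite /sqd addr_ge0 // sqr_ge0. Qed.

Lemma sqdC p q : sqd p q = sqd q p.
Proof. rewrite /sqd; ring. Qed.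

Lemma edist_le p q r s : (Defs.edist p q <= Defs.edist r s) = (sqd p q <= sqd r s).
Proof. by rewrite /Defs.edist ler_sqrt // sqd_ge0. Qed.

Lemma edist_lt p q r s : (Defs.edist p q < Defs.edist r s) = (sqd p q < sqd r s).
Proof. by rewrite !ltNge edist_le. Qed.

Lemma edist_eq p q r s : Defs.edist p q = Defs.edist r s -> sqd p q = sqd r s.
Proof.
move=> h; apply/eqP; rewrite eq_le -!edist_le h lexx //.
Qed.

Lemma Dneq0 x y : x != y -> (y.1 - x.1)^+2 + (y.2 - x.2)^+2 != 0.
Proof.
apply: contra => /eqP H.
have g1 := sqr_ge0 (y.1 - x.1); have g2 := sqr_ge0 (y.2 - x.2).
have h1 : (y.1 - x.1)^+2 = 0 by apply/eqP; rewrite eq_le g1 andbT; lra.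
have h2 : (y.2 - x.2)^+2 = 0 by apply/eqP; rewrite eq_le g2 andbT; lra.
move: h1 h2 => /eqP; rewrite sqrf_eq0 subr_eq0 => /eqP e1 /eqP; rewrite sqrf_eq0 subr_eq0 => /eqP e2.
by rewrite [x]surjective_pairing [y]surjective_pairing e1 e2.
Qed.

Lemma refl_sqd_x x y p : x != y -> sqd (reflect_line x y p) x = sqd p x.
Proof.
move=> /Dneq0 D0; rewrite /sqd /reflect_line /=. field. exact: D0.
Qed.
Lemma refl_sqd_y x y p : x != y -> sqd (reflect_line x y p) y = sqd p y.
Proof.
move=> /Dneq0 D0; rewrite /sqd /reflect_line /=. field. exact: D0.
Qed.
Lemma refl_sqd x y p q : x != y -> sqd (reflect_line x y p) (reflect_line x y q) = sqd p q.
Proof.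
move=> /Dneq0 D0; rewrite /sqd /reflect_line /=. field. exact: D0.
Qed.
Lemma reflK x y p : x != y -> reflect_line x y (reflect_line x y p) = p.
Proof.
move=> /Dneq0 D0; rewrite /reflect_line /=; case: p => a b /=.
congr pair; field; exact: D0.
Qed.

Lemma phi_eq x y z w : x != y -> sqd w x = sqd z x -> sqd w y = sqd z y ->
  w = z \/ w = reflect_line x y z.
Proof.
move=> /Dneq0 D0; rewrite /sqd => e1 e2.
set d1 := y.1 - x.1; set d2 := y.2 - x.2.
set a1 := z.1 - x.1; set a2 := z.2 - x.2; set b1 := w.1 - x.1; set b2 := w.2 - x.2.
have hk : b1 * d1 + b2 * d2 = a1 * d1 + a2 * d2.
  have E1 : w.1 - y.1 = b1 - d1 by rewrite /b1 /d1; ring.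
  have E2 : w.2 - y.2 = b2 - d2 by rewrite /b2 /d2; ring.
  have E3 : z.1 - y.1 = a1 - d1 by rewrite /a1 /d1; ring.
  have E4 : z.2 - y.2 = a2 - d2 by rewrite /a2 /d2; ring.
  move: e2; rewrite E1 E2 E3 E4 => e2.
  rewrite -/b1 -/b2 -/a1 -/a2 in e1.
  nra.
have hn : b1^+2 + b2^+2 = a1^+2 + a2^+2 by [].
have hc : (b1 * d2 - b2 * d1 - (a1 * d2 - a2 * d1)) * (b1 * d2 - b2 * d1 + (a1 * d2 - a2 * d1)) = 0.
  have I1 : (b1 * d2 - b2 * d1)^+2 = (b1^+2 + b2^+2) * (d1^+2+d2^+2) - (b1 * d1 + b2 * d2)^+2 by ring.
  have I2 : (a1 * d2 - a2 * d1)^+2 = (a1^+2 + a2^+2) * (d1^+2+d2^+2) - (a1 * d1 + a2 * d2)^+2 by ring.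
  have -> : (b1 * d2 - b2 * d1 - (a1 * d2 - a2 * d1)) * (b1 * d2 - b2 * d1 + (a1 * d2 - a2 * d1))
     = (b1 * d2 - b2 * d1)^+2 - (a1 * d2 - a2 * d1)^+2 by ring.
  by rewrite I1 I2 hn hk; ring.
move/eqP: hc; rewrite mulf_eq0 => /orP[] /eqP hc.
- left.
  have F1 : (d1^+2 + d2^+2) * (b1 - a1) = 0.
    have -> : (d1^+2 + d2^+2) * (b1 - a1) = (b1 * d1 + b2 * d2 - (a1 * d1 + a2 * d2)) * d1
       + (b1 * d2 - b2 * d1 - (a1 * d2 - a2 * d1)) * d2 by ring.
    by rewrite hk hc; ring.
  have F2 : (d1^+2 + d2^+2) * (b2 - a2) = 0.
    have -> : (d1^+2 + d2^+2) * (b2 - a2) = (b1 * d1 + b2 * d2 - (a1 * d1 + a2 * d2)) * d2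
       - (b1 * d2 - b2 * d1 - (a1 * d2 - a2 * d1)) * d1 by ring.
    by rewrite hk hc; ring.
  move/eqP: F1; rewrite mulf_eq0 (negbTE D0) /= subr_eq0 /b1 /a1 => /eqP G1.
  move/eqP: F2; rewrite mulf_eq0 (negbTE D0) /= subr_eq0 /b2 /a2 => /eqP G2.
  have H1 : w.1 = z.1 by move: G1 => /eqP; rewrite (can2_eq (addrNK _) (addrK _)) => /eqP ->; ring.
  have H2 : w.2 = z.2 by move: G2 => /eqP; rewrite (can2_eq (addrNK _) (addrK _)) => /eqP ->; ring.
  by rewrite [w]surjective_pairing [z]surjective_pairing H1 H2.
- right.
  rewrite [w]surjective_pairing /reflect_line /=; congr pair.
  + apply: (mulfI D0); rewrite -/d1 -/d2.
    have -> : w.1 = b1 + x.1 by rewrite /b1; ring.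
    have -> : z.1 = a1 + x.1 by rewrite /a1; ring.
    have -> : z.2 = a2 + x.2 by rewrite /a2; ring.
    have Hb : (d1^+2 + d2^+2) * b1 = (b1 * d1 + b2 * d2) * d1 + (b1 * d2 - b2 * d1) * d2 by ring.
    have Hb' : (b1 * d2 - b2 * d1) = - (a1 * d2 - a2 * d1) by rewrite -[LHS]subr0 -hc; ring.
    rewrite mulrDr Hb hk Hb'; field; exact: D0.
  + apply: (mulfI D0); rewrite -/d1 -/d2.
    have -> : w.2 = b2 + x.2 by rewrite /b2; ring.
    have -> : z.1 = a1 + x.1 by rewrite /a1; ring.
    have -> : z.2 = a2 + x.2 by rewrite /a2; ring.
    have Hb : (d1^+2 + d2^+2) * b2 = (b1 * d1 + b2 * d2) * d2 - (b1 * d2 - b2 * d1) * d1 by ring.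
    have Hb' : (b1 * d2 - b2 * d1) = - (a1 * d2 - a2 * d1) by rewrite -[LHS]subr0 -hc; ring.
    rewrite mulrDr Hb hk Hb'; field; exact: D0.
Qed.
Lemma fixed_line x y b : x != y -> reflect_line x y b = b ->
  exists l : R, b = (x.1 + l * (y.1 - x.1), x.2 + l * (y.2 - x.2)).
Proof.
move=> xy E; set c := (((b.1 - x.1) * (y.1 - x.1) + (b.2 - x.2) * (y.2 - x.2)) /
   ((y.1 - x.1) ^+ 2 + (y.2 - x.2) ^+ 2)).
exists c.
have E1 := congr1 fst E; have E2 := congr1 snd E.
rewrite /reflect_line /= -/c in E1 E2.
rewrite [b]surjective_pairing; congr pair; lra.
Qed.

Lemma online_contra x y b b' : x != y ->
  reflect_line x y b = b -> reflect_line x y b' = b' ->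
  sqd b x <= sqd y x -> sqd b y <= sqd y x ->
  sqd b' x <= sqd y x -> sqd b' y <= sqd y x ->
  sqd b x < sqd b' x -> sqd b y < sqd b' y -> False.
Proof.
move=> xy /(fixed_line xy) [l ->] /(fixed_line xy) [m ->].
have D0 := Dneq0 xy.
have Dp : 0 < (y.1 - x.1)^+2 + (y.2 - x.2)^+2.
  by rewrite lt_def D0 addr_ge0 // sqr_ge0.
set D := (y.1 - x.1)^+2 + (y.2 - x.2)^+2 in D0 Dp *.
have Ex : forall k : R, sqd (x.1 + k * (y.1 - x.1), x.2 + k * (y.2 - x.2)) x = k^+2 * D.
  by move=> k; rewrite /sqd /D /=; ring.
have Ey : forall k : R, sqd (x.1 + k * (y.1 - x.1), x.2 + k * (y.2 - x.2)) y = (1 - k)^+2 * D.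
  by move=> k; rewrite /sqd /D /=; ring.
have Eyx : sqd y x = 1 * D by rewrite /sqd /D mul1r.
rewrite !Ex !Ey Eyx !ler_pM2r // !ltr_pM2r //.
move=> h1 h2 h3 h4 h5 h6.
have l0 : 0 <= l by nra.
have l1 : l <= 1 by nra.
have m0 : 0 <= m by nra.
have m1 : m <= 1 by nra.
have lm : l < m by nra.
nra.
Qed.
Definition bar4 (x1 x2 x3 x4 : pt R) (m1 m2 m3 m4 : R) : pt R :=
  (m1 * x1.1 + m2 * x2.1 + m3 * x3.1 + m4 * x4.1,
   m1 * x1.2 + m2 * x2.2 + m3 * x3.2 + m4 * x4.2).

Definition nsq (p : pt R) := p.1 * p.1 + p.2 * p.2.

Definition Psi (c1 c2 c3 c4 : R) (x1 x2 x3 x4 : pt R) (m1 m2 m3 m4 : R) : R :=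
  m1 * c1 + m2 * c2 + m3 * c3 + m4 * c4 - nsq (bar4 x1 x2 x3 x4 m1 m2 m3 m4).

Lemma Psi_le0 (x1 x2 x3 x4 y1 y2 y3 y4 q : pt R) (m1 m2 m3 m4 : R) :
  sqd x1 x2 <= sqd y1 y2 -> sqd x1 x3 <= sqd y1 y3 -> sqd x1 x4 <= sqd y1 y4 ->
  sqd x2 x3 <= sqd y2 y3 -> sqd x2 x4 <= sqd y2 y4 -> sqd x3 x4 <= sqd y3 y4 ->
  0 <= m1 -> 0 <= m2 -> 0 <= m3 -> 0 <= m4 -> m1 + m2 + m3 + m4 = 1 ->
  Psi (nsq x1 - sqd q y1) (nsq x2 - sqd q y2) (nsq x3 - sqd q y3) (nsq x4 - sqd q y4)
      x1 x2 x3 x4 m1 m2 m3 m4 <= 0.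
Proof.
move=> h12 h13 h14 h23 h24 h34 g1 g2 g3 g4 hs.
have -> : m4 = 1 - m1 - m2 - m3 by rewrite -hs; ring.
have -> : Psi (nsq x1 - sqd q y1) (nsq x2 - sqd q y2) (nsq x3 - sqd q y3) (nsq x4 - sqd q y4)
      x1 x2 x3 x4 m1 m2 m3 (1 - m1 - m2 - m3) =
   m1 * m2 * (sqd x1 x2 - sqd y1 y2) + m1 * m3 * (sqd x1 x3 - sqd y1 y3)
 + m1 * (1 - m1 - m2 - m3) * (sqd x1 x4 - sqd y1 y4)
 + m2 * m3 * (sqd x2 x3 - sqd y2 y3) + m2 * (1 - m1 - m2 - m3) * (sqd x2 x4 - sqd y2 y4)
 + m3 * (1 - m1 - m2 - m3) * (sqd x3 x4 - sqd y3 y4)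
 - sqd q (bar4 y1 y2 y3 y4 m1 m2 m3 (1 - m1 - m2 - m3)).
  by rewrite /Psi /nsq /bar4 /sqd /=; ring.
have m4e : 0 <= 1 - m1 - m2 - m3 by rewrite -hs; lra.
set m4' := 1 - m1 - m2 - m3 in m4e *.
have t1 : m1 * m2 * (sqd x1 x2 - sqd y1 y2) <= 0 by rewrite mulr_ge0_le0 ?mulr_ge0 // subr_le0.
have t2 : m1 * m3 * (sqd x1 x3 - sqd y1 y3) <= 0 by rewrite mulr_ge0_le0 ?mulr_ge0 // subr_le0.
have t3 : m1 * m4' * (sqd x1 x4 - sqd y1 y4) <= 0 by rewrite mulr_ge0_le0 ?mulr_ge0 // subr_le0.
have t4 : m2 * m3 * (sqd x2 x3 - sqd y2 y3) <= 0 by rewrite mulr_ge0_le0 ?mulr_ge0 // subr_le0.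
have t5 : m2 * m4' * (sqd x2 x4 - sqd y2 y4) <= 0 by rewrite mulr_ge0_le0 ?mulr_ge0 // subr_le0.
have t6 : m3 * m4' * (sqd x3 x4 - sqd y3 y4) <= 0 by rewrite mulr_ge0_le0 ?mulr_ge0 // subr_le0.
have t7 := sqd_ge0 q (bar4 y1 y2 y3 y4 m1 m2 m3 m4').
lra.
Qed.
Lemma small_le0 (a b : R) : 0 <= b -> (forall s, 0 < s -> s <= 1 -> a <= s * b) -> a <= 0.
Proof.
move=> b0 H; case: (lerP a 0) => // ha.
have hp : 0 < a + b + 1 by lra.
set s := a / (a + b + 1).
have s0 : 0 < s by rewrite divr_gt0.
have s1 : s <= 1 by rewrite ler_pdivrMr // mul1r; lra.
have h := H s s0 s1.
have e : s * (a + b + 1) = a by rewrite /s mulfVK // gt_eqF.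
have : a * (a + b + 1) <= s * b * (a + b + 1) by rewrite ler_pM2r.
have -> : s * b * (a + b + 1) = a * b by rewrite mulrAC e.
nra.
Qed.

Section FO.
Variables (c1 c2 c3 c4 : R) (x1 x2 x3 x4 : pt R).
Local Notation P := (Psi c1 c2 c3 c4 x1 x2 x3 x4).
Local Notation B := (bar4 x1 x2 x3 x4).

Lemma first_order m1 m2 m3 m4 :
  0 <= m1 -> 0 <= m2 -> 0 <= m3 -> 0 <= m4 -> m1 + m2 + m3 + m4 = 1 ->
  (forall a1 a2 a3 a4, 0 <= a1 -> 0 <= a2 -> 0 <= a3 -> 0 <= a4 ->
     a1 + a2 + a3 + a4 = 1 -> P a1 a2 a3 a4 <= P m1 m2 m3 m4) ->
  [/\ sqd (B m1 m2 m3 m4) x1 - nsq x1 + c1 <= P m1 m2 m3 m4,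
      sqd (B m1 m2 m3 m4) x2 - nsq x2 + c2 <= P m1 m2 m3 m4,
      sqd (B m1 m2 m3 m4) x3 - nsq x3 + c3 <= P m1 m2 m3 m4 &
      sqd (B m1 m2 m3 m4) x4 - nsq x4 + c4 <= P m1 m2 m3 m4].
Proof.
move=> g1 g2 g3 g4 hs Hmax.
have key : forall (e d : R), 0 <= d ->
   (forall s, 0 < s -> s <= 1 -> P m1 m2 m3 m4 + s * (e - P m1 m2 m3 m4) - s^+2 * d <= P m1 m2 m3 m4) ->
   e <= P m1 m2 m3 m4.
  move=> e d d0 H; rewrite -subr_le0; apply: (small_le0 d0) => s s0 s1.
  have h := H s s0 s1.
  have : s * (e - P m1 m2 m3 m4) <= s * (s * d) by rewrite mulrA -expr2; lra.
  by rewrite ler_pM2l.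
have w0 : forall s : R, s <= 1 -> forall m : R, 0 <= m -> 0 <= (1 - s) * m.
  by move=> s s1 m m0; apply: mulr_ge0 => //; rewrite subr_ge0.
split.
- apply: (key _ (sqd x1 (B m1 m2 m3 m4))); first exact: sqd_ge0.
  move=> s s0 s1.
  have <- : P ((1 - s) * m1 + s) ((1 - s) * m2) ((1 - s) * m3) ((1 - s) * m4)
    = P m1 m2 m3 m4 + s * (sqd (B m1 m2 m3 m4) x1 - nsq x1 + c1 - P m1 m2 m3 m4)
      - s^+2 * sqd x1 (B m1 m2 m3 m4) by rewrite /Psi /nsq /bar4 /sqd /=; ring.
  apply: Hmax; try (by apply: w0); try (by apply: addr_ge0; [apply: w0 | apply: ltW]).
  apply: (@eq_trans _ _ ((1 - s) * (m1 + m2 + m3 + m4) + s)); first ring.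
  by rewrite hs; ring.
- apply: (key _ (sqd x2 (B m1 m2 m3 m4))); first exact: sqd_ge0.
  move=> s s0 s1.
  have <- : P ((1 - s) * m1) ((1 - s) * m2 + s) ((1 - s) * m3) ((1 - s) * m4)
    = P m1 m2 m3 m4 + s * (sqd (B m1 m2 m3 m4) x2 - nsq x2 + c2 - P m1 m2 m3 m4)
      - s^+2 * sqd x2 (B m1 m2 m3 m4) by rewrite /Psi /nsq /bar4 /sqd /=; ring.
  apply: Hmax; try (by apply: w0); try (by apply: addr_ge0; [apply: w0 | apply: ltW]).
  rewrite -[RHS]/(1 : R); rewrite -[X in X = _](_ : (1 - s) * (m1 + m2 + m3 + m4) + s = _); first by rewrite hs; ring.
  ring.
- apply: (key _ (sqd x3 (B m1 m2 m3 m4))); first exact: sqd_ge0.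
  move=> s s0 s1.
  have <- : P ((1 - s) * m1) ((1 - s) * m2) ((1 - s) * m3 + s) ((1 - s) * m4)
    = P m1 m2 m3 m4 + s * (sqd (B m1 m2 m3 m4) x3 - nsq x3 + c3 - P m1 m2 m3 m4)
      - s^+2 * sqd x3 (B m1 m2 m3 m4) by rewrite /Psi /nsq /bar4 /sqd /=; ring.
  apply: Hmax; try (by apply: w0); try (by apply: addr_ge0; [apply: w0 | apply: ltW]).
  rewrite -[RHS]/(1 : R); rewrite -[X in X = _](_ : (1 - s) * (m1 + m2 + m3 + m4) + s = _); first by rewrite hs; ring.
  ring.
- apply: (key _ (sqd x4 (B m1 m2 m3 m4))); first exact: sqd_ge0.
  move=> s s0 s1.
  have <- : P ((1 - s) * m1) ((1 - s) * m2) ((1 - s) * m3) ((1 - s) * m4 + s)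
    = P m1 m2 m3 m4 + s * (sqd (B m1 m2 m3 m4) x4 - nsq x4 + c4 - P m1 m2 m3 m4)
      - s^+2 * sqd x4 (B m1 m2 m3 m4) by rewrite /Psi /nsq /bar4 /sqd /=; ring.
  apply: Hmax; try (by apply: w0); try (by apply: addr_ge0; [apply: w0 | apply: ltW]).
  rewrite -[RHS]/(1 : R); rewrite -[X in X = _](_ : (1 - s) * (m1 + m2 + m3 + m4) + s = _); first by rewrite hs; ring.
  ring.
Qed.
End FO.
Section EVT.
Local Notation V := 'rV[R]_4.
Let cC (k : R) : continuous (fun _ : V => k). Proof. exact: cst_continuous. Qed.
Let cCo i : continuous (fun v : V => v ord0 i). Proof. exact: coord_continuous. Qed.
Let cD (f g : V -> R) : continuous f -> continuous g -> continuous (fun v => f v + g v).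
Proof. by move=> cf cg v; exact: (cvgD (cf v) (cg v)). Qed.
Let cN (f : V -> R) : continuous f -> continuous (fun v => - f v).
Proof. by move=> cf v; exact: (cvgN (cf v)). Qed.
Let cM (f g : V -> R) : continuous f -> continuous g -> continuous (fun v => f v * g v).
Proof. by move=> cf cg v; exact: (cvgM (cf v) (cg v)). Qed.

Lemma simplex_max (c1 c2 c3 c4 : R) (x1 x2 x3 x4 : pt R) :
  exists m1 m2 m3 m4, [/\ [/\ 0 <= m1, 0 <= m2, 0 <= m3 & 0 <= m4], m1 + m2 + m3 + m4 = 1 &
  forall a1 a2 a3 a4, 0 <= a1 -> 0 <= a2 -> 0 <= a3 -> 0 <= a4 ->
     a1 + a2 + a3 + a4 = 1 ->
     Psi c1 c2 c3 c4 x1 x2 x3 x4 a1 a2 a3 a4 <= Psi c1 c2 c3 c4 x1 x2 x3 x4 m1 m2 m3 m4].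
Proof.
pose i0 : 'I_4 := @Ordinal 4 0 isT. pose i1 : 'I_4 := @Ordinal 4 1 isT.
pose i2 : 'I_4 := @Ordinal 4 2 isT. pose i3 : 'I_4 := @Ordinal 4 3 isT.
pose S : set V := [set v | 0 <= v ord0 i0] `&` [set v | 0 <= v ord0 i1] `&`
  [set v | 0 <= v ord0 i2] `&` [set v | 0 <= v ord0 i3] `&`
  [set v | v ord0 i0 + v ord0 i1 + v ord0 i2 + v ord0 i3 = 1].
pose F (v : V) := Psi c1 c2 c3 c4 x1 x2 x3 x4 (v ord0 i0) (v ord0 i1) (v ord0 i2) (v ord0 i3).
pose mk (a1 a2 a3 a4 : R) : V :=
  \row_i (if i == i0 then a1 else if i == i1 then a2 else if i == i2 then a3 else a4).
have mkE a1 a2 a3 a4 : [/\ mk a1 a2 a3 a4 ord0 i0 = a1, mk a1 a2 a3 a4 ord0 i1 = a2,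
    mk a1 a2 a3 a4 ord0 i2 = a3 & mk a1 a2 a3 a4 ord0 i3 = a4].
  by rewrite !mxE.
have mkS a1 a2 a3 a4 : 0 <= a1 -> 0 <= a2 -> 0 <= a3 -> 0 <= a4 ->
     a1 + a2 + a3 + a4 = 1 -> S (mk a1 a2 a3 a4).
  move=> g1 g2 g3 g4 ga; case: (mkE a1 a2 a3 a4) => e0 e1 e2 e3.
  by rewrite /S /= e0 e1 e2 e3; repeat split.
have Sne : S !=set0.
  by exists (mk 1 0 0 0); apply: mkS => //; rewrite !addr0.
have clge i : closed [set v : V | 0 <= v ord0 i].
  apply: (@preimage_closed _ _ (fun v : V => v ord0 i) [set x : R | 0 <= x]).
    by move=> v _; apply: coord_continuous.
  exact: closed_ge.
have Scl : closed S.
  apply: closedI; last first.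
    apply: (@preimage_closed _ _ (fun v : V => v ord0 i0 + v ord0 i1 + v ord0 i2 + v ord0 i3)
      [set x : R | x = 1]); last exact: closed_eq.
    move=> v _; apply: cD; [apply: cD; [apply: cD|]|]; apply: cCo.
  by repeat apply: closedI; apply: clge.
have Scp : compact S.
  have Bc : compact [set v : V | forall i, v ord0 i \in `[(0:R), 1]].
    apply: (@rV_compact _ _ (fun=> `[(0:R), 1]%classic)).
    by move=> _; apply: segment_compact.
  apply: (subclosed_compact Scl Bc).
  move=> v [[[[h0 h1] h2] h3] hs] i; rewrite /= in h0 h1 h2 h3 hs.
  have : i = i0 \/ i = i1 \/ i = i2 \/ i = i3.
    case: i => -[|[|[|[|//]]]] Hi; [left|right;left|right;right;left|right;right;right];
      by apply/val_inj.
  by rewrite in_itv /=; case=> [->|[->|[->|->]]]; apply/andP; split => //; lra.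
have Fc : continuous F.
  rewrite /F /Psi /nsq /bar4 /=.
  by repeat (first [apply: cD | apply: cN | apply: cM | apply: cCo | apply: cC]).
have cF : {within S, continuous F} by apply: continuous_subspaceT.
have [v vS vmax] := EVT_max_rV Sne Scp cF.
move: vS; rewrite inE => -[[[[h0 h1] h2] h3] hs].
exists (v ord0 i0), (v ord0 i1), (v ord0 i2), (v ord0 i3); split => //.
move=> a1 a2 a3 a4 g1 g2 g3 g4 ga.
have := vmax (mk a1 a2 a3 a4); rewrite inE => /(_ (mkS _ _ _ _ g1 g2 g3 g4 ga)).
by rewrite /F; case: (mkE a1 a2 a3 a4) => -> -> -> ->.
Qed.
End EVT.
Lemma kirsz (x1 x2 x3 x4 y1 y2 y3 y4 q : pt R) :
  sqd x1 x2 <= sqd y1 y2 -> sqd x1 x3 <= sqd y1 y3 -> sqd x1 x4 <= sqd y1 y4 ->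
  sqd x2 x3 <= sqd y2 y3 -> sqd x2 x4 <= sqd y2 y4 -> sqd x3 x4 <= sqd y3 y4 ->
  exists p, [/\ sqd p x1 <= sqd q y1, sqd p x2 <= sqd q y2,
                sqd p x3 <= sqd q y3 & sqd p x4 <= sqd q y4].
Proof.
move=> h12 h13 h14 h23 h24 h34.
have [m1 [m2 [m3 [m4 [[g1 g2 g3 g4] hs hmax]]]]] :=
  simplex_max (nsq x1 - sqd q y1) (nsq x2 - sqd q y2) (nsq x3 - sqd q y3) (nsq x4 - sqd q y4)
    x1 x2 x3 x4.
have := first_order g1 g2 g3 g4 hs hmax.
have := @Psi_le0 x1 x2 x3 x4 y1 y2 y3 y4 q m1 m2 m3 m4 h12 h13 h14 h23 h24 h34 g1 g2 g3 g4 hs.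
move=> le0 [f1 f2 f3 f4].
exists (bar4 x1 x2 x3 x4 m1 m2 m3 m4); split; lra.
Qed.
Lemma interiorE (S : set (pt R)) z : interior S z <->
  exists2 e : R, 0 < e & forall w : pt R, `|z.1 - w.1| < e -> `|z.2 - w.2| < e -> S w.
Proof.
rewrite /interior nbhs_ballP; split => -[e e0 H]; exists e => // w.
  by move=> h1 h2; apply: H; rewrite /ball /= /prod_ball /ball /=.
by rewrite /ball /= /prod_ball /ball /= => -[h1 h2]; apply: H.
Qed.

Lemma compact_closedS (S : set (pt R)) : compact S -> closed S.
Proof. exact: compact_closed (@norm_hausdorff _ _). Qed.

Lemma compact_box (S : set (pt R)) : compact S ->
  exists M : R, forall z, S z -> `|z.1| <= M /\ `|z.2| <= M.
Proof.
move=> /compact_bounded [M [_ HM]].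
exists (M + 1) => z Sz.
have := HM (M + 1) ltac:(lra) z Sz.
by rewrite /Num.norm /= /ProdNormedZmodule.norm /= ge_max => /andP[].
Qed.

Lemma boundaryE (S : set (pt R)) z : closed S ->
  Defs.boundary S z <-> S z /\ ~ interior S z.
Proof. by move=> /closure_id cS; rewrite /Defs.boundary -cS. Qed.

Lemma lt_sq_of_abs (a e : R) : `|a| < e -> a^+2 < e^+2.
Proof. rewrite ltr_norml => /andP[h1 h2]; nra. Qed.

Lemma abs_of_sq (a e : R) : 0 < e -> a^+2 < e^+2 -> `|a| < e.
Proof. move=> e0 h; rewrite ltr_norml; apply/andP; split; nra. Qed.

Lemma refl_interior x y (S : set (pt R)) z : x != y -> symmetric_set S x y ->
  interior S z -> interior S (reflect_line x y z).
Proof.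
move=> xy sym /interiorE [e e0 He]; apply/interiorE; exists (e / 2); first by lra.
move=> w h1 h2; apply/(sym w).2.
have hs : sqd (reflect_line x y w) z < e^+2 / 2.
  rewrite -(reflK z xy) refl_sqd // sqdC /sqd.
  have := lt_sq_of_abs h1; have := lt_sq_of_abs h2.
  have -> : (e / 2)^+2 = e^+2 / 4 by field.
  lra.
have q1 := sqr_ge0 ((reflect_line x y w).1 - z.1).
have q2 := sqr_ge0 ((reflect_line x y w).2 - z.2).
have ee : 0 < e^+2 by rewrite exprn_gt0.
have k1 : ((reflect_line x y w).1 - z.1)^+2 < e^+2 by move: hs; rewrite /sqd; lra.
have k2 : ((reflect_line x y w).2 - z.2)^+2 < e^+2 by move: hs; rewrite /sqd; lra.
apply: He.
- by rewrite distrC; exact: (abs_of_sq e0 k1).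
- by rewrite distrC; exact: (abs_of_sq e0 k2).
Qed.

Lemma refl_boundary x y (S : set (pt R)) z : x != y -> symmetric_set S x y -> closed S ->
  Defs.boundary S z -> Defs.boundary S (reflect_line x y z).
Proof.
move=> xy sym cS /(boundaryE _ cS) [Sz nI]; apply/(boundaryE _ cS); split.
  by apply/(sym z).1.
by move=> /(refl_interior xy sym); rewrite reflK.
Qed.

Lemma path_bd (S : set (pt R)) a v : closed S -> S a -> ~ S (a.1 + v.1, a.2 + v.2) ->
  exists t : R, [/\ 0 <= t, t < 1, S (a.1 + t * v.1, a.2 + t * v.2) &
                 ~ interior S (a.1 + t * v.1, a.2 + t * v.2)].
Proof.
move=> cS Sa nSb.
pose g (t : R) : pt R := (a.1 + t * v.1, a.2 + t * v.2).
pose T := [set t : R | (0 <= t <= 1) /\ S (g t)].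
have g0 : g 0 = a by rewrite /g !mul0r !addr0 -surjective_pairing.
have g1 : g 1 = (a.1 + v.1, a.2 + v.2) by rewrite /g !mul1r.
have T0 : T 0 by split; [rewrite lexx ler01 | rewrite g0].
have Tub : ubound T 1 by move=> t [/andP[_ ?] _].
have hT : has_sup T by split; [exists 0 | exists 1].
set s := sup T.
have s0 : 0 <= s := sup_upper_bound hT T0.
have s1 : s <= 1 := ge_sup (ex_intro _ 0 T0) Tub.
pose K := `|v.1| + `|v.2| + 1.
have K0 : 0 < K by rewrite /K; have := normr_ge0 v.1; have := normr_ge0 v.2; lra.
have gclose : forall e t t', 0 < e -> `|t - t'| < e / K ->
    `|(g t).1 - (g t').1| < e /\ `|(g t).2 - (g t').2| < e.
  move=> e t t' e0 h.
  have E1 : (g t).1 - (g t').1 = (t - t') * v.1 by rewrite /g /=; ring.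
  have E2 : (g t).2 - (g t').2 = (t - t') * v.2 by rewrite /g /=; ring.
  have hK : `|t - t'| * K < e by rewrite -ltr_pdivlMr.
  have n1 := normr_ge0 v.1; have n2 := normr_ge0 v.2; have n0 := normr_ge0 (t - t').
  have v1K : `|v.1| <= K by rewrite /K; lra.
  have v2K : `|v.2| <= K by rewrite /K; lra.
  by rewrite E1 E2 !normrM; split; apply: (le_lt_trans _ hK); apply: ler_wpM2l.
have Ss : S (g s).
  apply: cS => B /interiorE [e e0 He].
  have eK : 0 < e / K by rewrite divr_gt0.
  have [t Tt lt] := sup_adherent eK hT.
  exists (g t); split; first by case: Tt.
  have ts : t <= s := sup_upper_bound hT Tt.
  rewrite -/s in lt.
  have : `|s - t| < e / K by rewrite ger0_norm ?subr_ge0 //; lra.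
  by move=> /(gclose _ _ _ e0) [h1 h2]; apply: He.
have s1' : s < 1.
  by rewrite lt_neqAle s1 andbT; apply/eqP => es; apply: nSb; rewrite -g1 -es.
have nIs : ~ interior S (g s).
  move=> /interiorE [e e0 He].
  have eK : 0 < e / (2 * K) by rewrite divr_gt0 // mulr_gt0.
  pose d := Num.min (1 - s) (e / (2 * K)).
  have d0 : 0 < d by rewrite /d lt_min subr_gt0 s1' eK.
  have d1 : d <= 1 - s by rewrite /d ge_min lexx.
  have d2 : d <= e / (2 * K) by rewrite /d ge_min lexx orbT.
  have h2K : e / (2 * K) < e / K.
    by rewrite ltr_pM2l // ltf_pV2 ?posrE ?mulr_gt0 //; lra.
  have Tt : T (s + d).
    split; first by apply/andP; split; lra.
    have hsd : `|s - (s + d)| < e / K.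
      have -> : s - (s + d) = - d by ring.
      by rewrite normrN gtr0_norm //; lra.
    by have [h1 h2] := gclose _ _ _ e0 hsd; apply: He.
  have := sup_upper_bound hT Tt; rewrite -/s; lra.
by exists s.
Qed.
Lemma u01 (s : R) : unit01 s <-> 0 <= s <= 1.
Proof. by rewrite /unit01 /= in_itv. Qed.

Lemma u01_0 : unit01 (0:R). Proof. by apply/u01; rewrite lexx ler01. Qed.
Lemma u01_1 : unit01 (1:R). Proof. by apply/u01; rewrite lexx ler01. Qed.

Definition side_ok (g : R -> pt R) x y :=
  [/\ {in (@unit01 R) &, injective g}, g 0 = x, g 1 = y &
      forall s t, unit01 s -> unit01 t -> s <= t ->
        sqd (g s) x <= sqd (g t) x /\ sqd (g t) y <= sqd (g s) y].

Lemma side_of_slender g x y : arc_from_to g x y -> slender_side g x y -> side_ok g x y.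
Proof.
move=> [_ gi g0 g1] sl; split => // s t us ut st.
by have [] := sl s t us ut st; rewrite !edist_le.
Qed.

Lemma side_bound g x y s : side_ok g x y -> unit01 s ->
  sqd (g s) x <= sqd y x /\ sqd (g s) y <= sqd y x.
Proof.
move=> [_ g0 g1 mon] us; have /u01/andP[s0 s1] := us; split.
  by have [+ _] := mon s 1 us u01_1 s1; rewrite g1.
by have [_ +] := mon 0 s u01_0 us s0; rewrite g0 (sqdC x y).
Qed.

Lemma side_same g x y s t : side_ok g x y -> unit01 s -> unit01 t ->
  sqd (g s) x < sqd (g t) x -> sqd (g s) y < sqd (g t) y -> False.
Proof.
move=> [_ _ _ mon] us ut hx hy; case: (lerP s t) => st.
  by have [_ h] := mon s t us ut st; lra.
by have [h _] := mon t s ut us (ltW st); lra.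
Qed.

Lemma side_refl_lt g x y s t : x != y -> side_ok g x y -> unit01 s -> unit01 t -> s < t ->
  reflect_line x y (g s) = g t -> False.
Proof.
move=> xy [gi g0 g1 mon] us ut st E.
pose u := (s + t) / 2.
have su : s < u by rewrite /u; lra.
have ut' : u < t by rewrite /u; lra.
have uu : unit01 u.
  by move: us ut => /u01/andP[s0 s1] /u01/andP[t0 t1]; apply/u01/andP; split; lra.
have [a1 a2] := mon s u us uu (ltW su).
have [b1 b2] := mon u t uu ut (ltW ut').
have ex : sqd (g t) x = sqd (g s) x by rewrite -E refl_sqd_x.
have ey : sqd (g t) y = sqd (g s) y by rewrite -E refl_sqd_y.
have eu1 : sqd (g u) x = sqd (g s) x by lra.
have eu2 : sqd (g u) y = sqd (g s) y by lra.
have [e1|e1] := phi_eq xy eu1 eu2.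
- by have := gi _ _ (mem_set uu) (mem_set us) e1; lra.
- by rewrite E in e1; have := gi _ _ (mem_set uu) (mem_set ut) e1; lra.
Qed.

Lemma side_refl g x y s t : x != y -> side_ok g x y -> unit01 s -> unit01 t ->
  reflect_line x y (g s) = g t -> reflect_line x y (g s) = g s.
Proof.
move=> xy sg us ut E; case: (ltgtP s t) => st.
- by case: (side_refl_lt xy sg us ut st E).
- have E' : reflect_line x y (g t) = g s by rewrite -E reflK.
  by case: (side_refl_lt xy sg ut us st E').
- by rewrite E st.
Qed.
Section Adorn.
Variables (S : set (pt R)) (x y : pt R) (g1 g2 : R -> pt R).
Hypotheses (xy : x != y) (sym : symmetric_set S x y) (cS : closed S)
  (sg1 : side_ok g1 x y) (sg2 : side_ok g2 x y)
  (bdE : Defs.boundary S = g1 @` (@unit01 R) `|` g2 @` (@unit01 R)).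

Lemma on_sides z : Defs.boundary S z ->
  (exists2 s, unit01 s & g1 s = z) \/ (exists2 s, unit01 s & g2 s = z).
Proof. by rewrite bdE => -[[s us <-]|[s us <-]]; [left|right]; exists s. Qed.

Lemma cross (ga gb : R -> pt R) : side_ok ga x y -> side_ok gb x y ->
  (forall z, Defs.boundary S z ->
     (exists2 s, unit01 s & ga s = z) \/ (exists2 s, unit01 s & gb s = z)) ->
  forall s t, unit01 s -> unit01 t ->
  sqd (ga s) x < sqd (gb t) x -> sqd (ga s) y < sqd (gb t) y ->
  Defs.boundary S (ga s) -> Defs.boundary S (gb t) -> False.
Proof.
move=> sa sb onab s t us ut hx hy bs bt.
have fb : reflect_line x y (ga s) = ga s.
  have [[s1 us1 e1]|[t1 ut1 e1]] := onab _ (refl_boundary xy sym cS bs).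
    by apply: (side_refl xy sa us us1); rewrite e1.
  exfalso; apply: (side_same sb ut1 ut); rewrite e1 ?refl_sqd_x ?refl_sqd_y //.
have fb' : reflect_line x y (gb t) = gb t.
  have [[s1 us1 e1]|[t1 ut1 e1]] := onab _ (refl_boundary xy sym cS bt).
    exfalso; apply: (side_same sa us us1); rewrite e1 ?refl_sqd_x ?refl_sqd_y //.
  by apply: (side_refl xy sb ut ut1); rewrite e1.
have [a1 a2] := side_bound sa us.
have [b1 b2] := side_bound sb ut.
exact: (online_contra xy fb fb' a1 a2 b1 b2 hx hy).
Qed.

Lemma antichain b b' : Defs.boundary S b -> Defs.boundary S b' ->
  sqd b x < sqd b' x -> sqd b y < sqd b' y -> False.
Proof.
move=> bb bb' hx hy.
have on12 := on_sides.
have on21 : forall z, Defs.boundary S z ->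
  (exists2 s, unit01 s & g2 s = z) \/ (exists2 s, unit01 s & g1 s = z).
  by move=> z /on_sides [h|h]; [right|left].
case: (on_sides bb) => -[s us es]; case: (on_sides bb') => -[t ut et];
  subst b b'.
- exact: (side_same sg1 us ut hx hy).
- exact: (cross sg1 sg2 on12 us ut hx hy bb bb').
- exact: (cross sg2 sg1 on21 us ut hx hy bb bb').
- exact: (side_same sg2 us ut hx hy).
Qed.
End Adorn.
Lemma near_seg x y p : x != y -> exists n, [/\ Defs.segment x y n,
  sqd n x + sqd p n <= sqd p x & sqd n y + sqd p n <= sqd p y].
Proof.
move=> xy; have D0 := Dneq0 xy.
have Dp : 0 < (y.1 - x.1)^+2 + (y.2 - x.2)^+2 by rewrite lt_def D0 addr_ge0 // sqr_ge0.
set D := (y.1 - x.1)^+2 + (y.2 - x.2)^+2 in D0 Dp *.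
set dt := (p.1 - x.1) * (y.1 - x.1) + (p.2 - x.2) * (y.2 - x.2).
set l := dt / D.
have hl : l * D = dt by rewrite /l mulfVK.
have Epy : sqd p y = sqd p x - 2 * dt + D by rewrite /sqd /dt /D; ring.
have Eyx : sqd y x = D by rewrite /sqd /D.
have lerpE : forall t : R, lerp x y t = (x.1 + t * (y.1 - x.1), x.2 + t * (y.2 - x.2)).
  by move=> t; rewrite /lerp; congr pair; ring.
case: (lerP l 0) => l0.
  exists x; split.
  - by exists 0; [exact: u01_0 | rewrite lerpE !mul0r !addr0 -surjective_pairing].
  - by rewrite /sqd !subrr expr0n /= !add0r.
  - rewrite sqdC Eyx Epy.
    have : dt <= 0 by rewrite -hl mulr_le0_ge0 // ltW.
    lra.
case: (lerP 1 l) => l1.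
  exists y; split.
  - by exists 1; [exact: u01_1 | rewrite lerpE !mul1r !subrKC -surjective_pairing].
  - have : D <= dt by rewrite -hl ler_peMl // ltW.
    rewrite Eyx Epy; lra.
  - by rewrite /sqd !subrr expr0n /= !add0r.
exists (x.1 + l * (y.1 - x.1), x.2 + l * (y.2 - x.2)); split.
- by exists l; [apply/u01; rewrite !ltW | rewrite lerpE].
- have -> : sqd (x.1 + l * (y.1 - x.1), x.2 + l * (y.2 - x.2)) x
      + sqd p (x.1 + l * (y.1 - x.1), x.2 + l * (y.2 - x.2))
      = sqd p x + 2 * l * (l * D - dt) by rewrite /sqd /dt /D /=; ring.
  by rewrite hl subrr mulr0 addr0.
- have -> : sqd (x.1 + l * (y.1 - x.1), x.2 + l * (y.2 - x.2)) y
      + sqd p (x.1 + l * (y.1 - x.1), x.2 + l * (y.2 - x.2))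
      = sqd p y + 2 * (1 - l) * (dt - l * D) by rewrite /sqd /dt /D /=; ring.
  by rewrite hl subrr mulr0 addr0.
Qed.

Lemma stepA_ineq (p n z : pt R) (t : R) : 0 <= t -> t < 1 -> 0 < sqd p n ->
  sqd n z + sqd p n <= sqd p z ->
  sqd (n.1 + t * (p.1 - n.1), n.2 + t * (p.2 - n.2)) z < sqd p z.
Proof.
move=> t0 t1 pn h.
set sg := 1 - t.
have sg0 : 0 < sg by rewrite /sg; lra.
have sg1 : sg <= 1 by rewrite /sg; lra.
have -> : sqd (n.1 + t * (p.1 - n.1), n.2 + t * (p.2 - n.2)) z
   = sqd p z + sg * (sqd n z - sqd p z) - sg * (1 - sg) * sqd p n.
  by rewrite /sg /sqd /=; ring.
have a1 : sg * (sqd n z - sqd p z) <= sg * (- sqd p n) by apply: ler_wpM2l; [exact: ltW | lra].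
have a2 : 0 <= sg * (1 - sg) * sqd p n.
  by apply: mulr_ge0; [apply: mulr_ge0; [exact: ltW | rewrite subr_ge0] | exact: sqd_ge0].
have a3 : 0 < sg * sqd p n by rewrite mulr_gt0.
rewrite mulrN in a1; lra.
Qed.
Lemma stepB (S : set (pt R)) x y c : x != y -> compact S -> S c ->
  exists z, [/\ S z, ~ interior S z, sqd c x <= sqd z x & sqd c y <= sqd z y].
Proof.
move=> xy cpS Sc; have cS := compact_closedS cpS.
have D0 := Dneq0 xy.
have Dp : 0 < (y.1 - x.1)^+2 + (y.2 - x.2)^+2 by rewrite lt_def D0 addr_ge0 // sqr_ge0.
set D := (y.1 - x.1)^+2 + (y.2 - x.2)^+2 in D0 Dp *.
have [w [hw1 hw2 hw3]] : exists w : pt R,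
  [/\ 0 <= w.1 * (c.1 - x.1) + w.2 * (c.2 - x.2),
      w.1 * (y.1 - x.1) + w.2 * (y.2 - x.2) = 0 & w.1^+2 + w.2^+2 = D].
  case: (lerP 0 (- (y.2 - x.2) * (c.1 - x.1) + (y.1 - x.1) * (c.2 - x.2))) => hk.
    by exists (- (y.2 - x.2), y.1 - x.1); split => //=; rewrite /D; ring.
  exists (y.2 - x.2, - (y.1 - x.1)); split => /=; [|ring|rewrite /D; ring].
  rewrite (_ : (y.2 - x.2) * (c.1 - x.1) + - (y.1 - x.1) * (c.2 - x.2) =
     - (- (y.2 - x.2) * (c.1 - x.1) + (y.1 - x.1) * (c.2 - x.2))); last by ring.
  by rewrite oppr_ge0 ltW.
have [M HM] := compact_box cpS.
have M0 : 0 <= M by have [h _] := HM c Sc; exact: le_trans (normr_ge0 _) h.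
set T := 1 + (8 * M^+2 + 1) / D.
have T1 : 1 <= T.
  rewrite /T lerDl; apply: divr_ge0; last exact: ltW.
  by apply: addr_ge0 => //; apply: mulr_ge0 => //; exact: sqr_ge0.
have TD : T * D = D + (8 * M^+2 + 1) by rewrite /T mulrDl mul1r mulfVK.
have nS : ~ S (c.1 + T * w.1, c.2 + T * w.2).
  move=> Sz; have [a1 a2] := HM _ Sz; have [b1 b2] := HM _ Sc.
  move: a1 a2 b1 b2 => /=; rewrite !ler_norml => /andP[a1 a1'] /andP[a2 a2'] /andP[b1 b1'] /andP[b2 b2'].
  have k1 : (T * w.1)^+2 <= 4 * M^+2 by nra.
  have k2 : (T * w.2)^+2 <= 4 * M^+2 by nra.
  have : T^+2 * D <= 8 * M^+2 by rewrite -hw3 mulrDr -!exprMn; lra.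
  have : T * D <= T^+2 * D by rewrite ler_pM2r // expr2 ler_peMl // (le_trans ler01 T1).
  lra.
have T0 : 0 < T by apply: lt_le_trans T1.
have [t [t0 t1 Sz nIz]] := path_bd (v := (T * w.1, T * w.2)) cS Sc nS.
exists (c.1 + t * (T * w.1), c.2 + t * (T * w.2)); split => //.
- have -> : sqd (c.1 + t * (T * w.1), c.2 + t * (T * w.2)) x
     = sqd c x + 2 * (t * T) * (w.1 * (c.1 - x.1) + w.2 * (c.2 - x.2)) + (t * T)^+2 * (w.1^+2 + w.2^+2).
    by rewrite /sqd /=; ring.
  have A1 : 0 <= 2 * (t * T) * (w.1 * (c.1 - x.1) + w.2 * (c.2 - x.2)).
    by apply: mulr_ge0 => //; apply: mulr_ge0 => //; apply: mulr_ge0 => //; exact: ltW.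
  have A2 : 0 <= (t * T)^+2 * (w.1^+2 + w.2^+2).
    by apply: mulr_ge0; [exact: sqr_ge0 | apply: addr_ge0; exact: sqr_ge0].
  lra.
- have -> : sqd (c.1 + t * (T * w.1), c.2 + t * (T * w.2)) y
     = sqd c y + 2 * (t * T) * (w.1 * (c.1 - x.1) + w.2 * (c.2 - x.2)
         - (w.1 * (y.1 - x.1) + w.2 * (y.2 - x.2))) + (t * T)^+2 * (w.1^+2 + w.2^+2).
    by rewrite /sqd /=; ring.
  rewrite hw2 subr0.
  have A1 : 0 <= 2 * (t * T) * (w.1 * (c.1 - x.1) + w.2 * (c.2 - x.2)).
    by apply: mulr_ge0 => //; apply: mulr_ge0 => //; apply: mulr_ge0 => //; exact: ltW.
  have A2 : 0 <= (t * T)^+2 * (w.1^+2 + w.2^+2).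
    by apply: mulr_ge0; [exact: sqr_ge0 | apply: addr_ge0; exact: sqr_ge0].
  lra.
Qed.
Lemma lens_in (S : set (pt R)) x y c p : sym_slender_adornment S x y -> S c ->
  sqd p x <= sqd c x -> sqd p y <= sqd c y -> S p.
Proof.
move=> [[g1 [g2 [[[cpS [_ xy]] _ segS [ar1 ar2] bdE] [sl1 sl2]]]] sym] Sc hx hy.
have cS := compact_closedS cpS.
have sg1 := side_of_slender ar1 sl1.
have sg2 := side_of_slender ar2 sl2.
apply: contrapT => nSp.
have [n [segn hnx hny]] := near_seg p xy.
have Sn : S n := segS n segn.
have pn : 0 < sqd p n.
  rewrite lt_def sqd_ge0 andbT; apply: (Dneq0 (x := n) (y := p)).
  by apply/eqP => e; apply: nSp; rewrite -e.
have hp : ~ S (n.1 + (p.1 - n.1), n.2 + (p.2 - n.2)).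
  by rewrite !subrKC -surjective_pairing.
have [t [t0 t1 Sb nIb]] := path_bd (v := (p.1 - n.1, p.2 - n.2)) cS Sn hp.
have bb : Defs.boundary S (n.1 + t * (p.1 - n.1), n.2 + t * (p.2 - n.2)).
  by apply/boundaryE.
have bx := stepA_ineq t0 t1 pn hnx.
have bY := stepA_ineq t0 t1 pn hny.
have [z [Sz nIz zx zy]] := stepB xy cpS Sc.
have bz : Defs.boundary S z by apply/boundaryE.
apply: (antichain xy sym cS sg1 sg2 bdE bb bz); lra.
Qed.
Lemma sqd_near (p z : pt R) (dl : R) : 0 < dl -> exists2 e : R, 0 < e &
  forall w : pt R, `|p.1 - w.1| < e -> `|p.2 - w.2| < e -> sqd w z < sqd p z + dl.
Proof.
move=> dl0.
pose B1 := `|p.1 - z.1|; pose B2 := `|p.2 - z.2|.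
pose K := B1 + B2 + 1.
have B10 : 0 <= B1 := normr_ge0 _.
have B20 : 0 <= B2 := normr_ge0 _.
have K0 : 0 < K by rewrite /K; lra.
pose e := Num.min 1 (dl / (4 * K)).
have eK : 0 < dl / (4 * K) by rewrite divr_gt0 // mulr_gt0.
have e0 : 0 < e by rewrite /e lt_min ltr01 eK.
have e1 : e <= 1 by rewrite /e ge_min lexx.
have e2 : e <= dl / (4 * K) by rewrite /e ge_min lexx orbT.
have e3 : e * (4 * K) <= dl by rewrite -ler_pdivlMr // mulr_gt0.
exists e => // w h1 h2.
have : `|p.1 - z.1| <= B1 by []. rewrite ler_norml => /andP[b1 b1'].
have : `|p.2 - z.2| <= B2 by []. rewrite ler_norml => /andP[b2 b2'].
move: h1 h2; rewrite !ltr_norml => /andP[h1 h1'] /andP[h2 h2'].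
have q1 : (w.1 - z.1)^+2 - (p.1 - z.1)^+2 <= e^+2 + 2 * B1 * e.
  have P1 : 0 <= (B1 + (p.1 - z.1)) * (e - (w.1 - p.1)) by apply: mulr_ge0; lra.
  have P2 : 0 <= (B1 - (p.1 - z.1)) * (e + (w.1 - p.1)) by apply: mulr_ge0; lra.
  have P3 : 0 <= (e - (w.1 - p.1)) * (e + (w.1 - p.1)) by apply: mulr_ge0; lra.
  have -> : (w.1 - z.1)^+2 - (p.1 - z.1)^+2 = (w.1 - p.1)^+2 + 2 * (p.1 - z.1) * (w.1 - p.1) by ring.
  nra.
have q2 : (w.2 - z.2)^+2 - (p.2 - z.2)^+2 <= e^+2 + 2 * B2 * e.
  have P1 : 0 <= (B2 + (p.2 - z.2)) * (e - (w.2 - p.2)) by apply: mulr_ge0; lra.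
  have P2 : 0 <= (B2 - (p.2 - z.2)) * (e + (w.2 - p.2)) by apply: mulr_ge0; lra.
  have P3 : 0 <= (e - (w.2 - p.2)) * (e + (w.2 - p.2)) by apply: mulr_ge0; lra.
  have -> : (w.2 - z.2)^+2 - (p.2 - z.2)^+2 = (w.2 - p.2)^+2 + 2 * (p.2 - z.2) * (w.2 - p.2) by ring.
  nra.
have ee : e^+2 <= e by rewrite expr2 ler_piMl // ltW.
rewrite /sqd.
have h4 : e * (4 * K) = 4 * (B1 * e) + 4 * (B2 * e) + 4 * e by rewrite /K; ring.
have h5 : 0 <= B1 * e by rewrite mulr_ge0 // ltW.
have h6 : 0 <= B2 * e by rewrite mulr_ge0 // ltW.
lra.
Qed.
Lemma perp_dir x y c : x != y -> exists w : pt R,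
  [/\ 0 <= w.1 * (c.1 - x.1) + w.2 * (c.2 - x.2),
      w.1 * (y.1 - x.1) + w.2 * (y.2 - x.2) = 0 & 0 < w.1^+2 + w.2^+2].
Proof.
move=> xy; have D0 := Dneq0 xy.
have Dp : 0 < (y.1 - x.1)^+2 + (y.2 - x.2)^+2 by rewrite lt_def D0 addr_ge0 // sqr_ge0.
case: (lerP 0 (- (y.2 - x.2) * (c.1 - x.1) + (y.1 - x.1) * (c.2 - x.2))) => hk.
  exists (- (y.2 - x.2), y.1 - x.1); split => //=; first by ring.
  by rewrite sqrrN addrC.
exists (y.2 - x.2, - (y.1 - x.1)); split => /=; [|ring|by rewrite sqrrN addrC].
rewrite (_ : (y.2 - x.2) * (c.1 - x.1) + - (y.1 - x.1) * (c.2 - x.2) =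
   - (- (y.2 - x.2) * (c.1 - x.1) + (y.1 - x.1) * (c.2 - x.2))); last by ring.
by rewrite oppr_ge0 ltW.
Qed.

Lemma lerp0 (a b : pt R) : lerp a b 0 = a.
Proof. by rewrite /lerp subr0 !mul1r !mul0r !addr0 -surjective_pairing. Qed.
Lemma lerp1 (a b : pt R) : lerp a b 1 = b.
Proof. by rewrite /lerp subrr !mul0r !mul1r !add0r -surjective_pairing. Qed.

Lemma iso_sqd (f : pt R -> pt R) p q : plane_isometry f -> sqd (f p) (f q) = sqd p q.
Proof. by move=> hf; apply: edist_eq; apply: hf. Qed.

Lemma main_case (cl : bool) n (X Y : 'I_n.+1 -> pt R) (A : 'I_n.+1 -> set (pt R))
  (f : 'I_n.+1 -> pt R -> pt R) a b q :
  same_chain cl X Y -> expansion cl X Y -> is_bar cl a -> is_bar cl b ->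
  sym_slender_adornment (A a) (X a) (X (bar_end a)) ->
  sym_slender_adornment (A b) (X b) (X (bar_end b)) ->
  [/\ plane_isometry (f a), f a (X a) = Y a & f a (X (bar_end a)) = Y (bar_end a)] ->
  [/\ plane_isometry (f b), f b (X b) = Y b & f b (X (bar_end b)) = Y (bar_end b)] ->
  (f a @` A a) q -> interior (f b @` A b) q ->
  exists p, A a p /\ interior (A b) p.
Proof.
move=> sc ex ba bb Ada Adb [isa fa1 fa2] [isb fb1 fb2] [p0 Ap0 <-] /interiorE [e e0 He].
have E : forall i j s t, is_bar cl i -> is_bar cl j -> unit01 s -> unit01 t ->
    sqd (lerp (X i) (X (bar_end i)) s) (lerp (X j) (X (bar_end j)) t)
    <= sqd (lerp (Y i) (Y (bar_end i)) s) (lerp (Y j) (Y (bar_end j)) t).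
  by move=> i j s t bi bj us ut; rewrite -edist_le; apply: ex.
have h12 := E a a 0 1 ba ba u01_0 u01_1; rewrite !lerp0 !lerp1 in h12.
have h13 := E a b 0 0 ba bb u01_0 u01_0; rewrite !lerp0 in h13.
have h14 := E a b 0 1 ba bb u01_0 u01_1; rewrite !lerp0 !lerp1 in h14.
have h23 := E a b 1 0 ba bb u01_1 u01_0; rewrite !lerp0 !lerp1 in h23.
have h24 := E a b 1 1 ba bb u01_1 u01_1; rewrite !lerp1 in h24.
have h34 := E b b 0 1 bb bb u01_0 u01_1; rewrite !lerp0 !lerp1 in h34.
have xyb : X b != X (bar_end b).
  by case: Adb => -[g1 [g2 [[[_ [_ h]] _ _ _ _] _]]] _.
have Yb : Y b != Y (bar_end b).
  apply/eqP => eY; move: (Dneq0 xyb); rewrite -/(sqd (X (bar_end b)) (X b)) sqdC.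
  by rewrite -(edist_eq (sc b bb)) -eY /sqd !subrr expr0n /= addr0 eqxx.
have [w [hw1 hw2 hw3]] := perp_dir (f a p0) Yb.
set K := `|w.1| + `|w.2| + 1.
have K0 : 0 < K by rewrite /K; have := normr_ge0 w.1; have := normr_ge0 w.2; lra.
set h := e / (2 * K).
have h0 : 0 < h by rewrite divr_gt0 // mulr_gt0.
have hK : h * K < e.
  have -> : h * K = e / 2 by rewrite /h; field; rewrite ?gt_eqF.
  lra.
set qq := f a p0 in hw1 *.
pose q2 : pt R := (qq.1 + h * w.1, qq.2 + h * w.2).
have [p2 Ap2 fp2] : (f b @` A b) q2.
  have w1K : `|w.1| <= K by rewrite /K; have := normr_ge0 w.2; lra.
  have w2K : `|w.2| <= K by rewrite /K; have := normr_ge0 w.1; lra.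
  apply: He; rewrite /q2 /= (_ : forall u v : R, u - (u + v) = - v); try (move=> u v; ring);
    rewrite normrN normrM gtr0_norm //.
  - by apply: le_lt_trans hK; rewrite ler_pM2l.
  - by apply: le_lt_trans hK; rewrite ler_pM2l.
have hq2 : 0 < h^+2 * (w.1^+2 + w.2^+2) by rewrite mulr_gt0 // exprn_gt0.
have hq2' : 0 <= 2 * h * (w.1 * (qq.1 - (Y b).1) + w.2 * (qq.2 - (Y b).2)).
  by apply: mulr_ge0 => //; apply: mulr_ge0 => //; exact: ltW.
have gx : sqd qq (Y b) < sqd p2 (X b).
  rewrite -(iso_sqd p2 (X b) isb) fb1 fp2.
  have -> : sqd q2 (Y b) = sqd qq (Y b) + 2 * h * (w.1 * (qq.1 - (Y b).1) + w.2 * (qq.2 - (Y b).2))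
      + h^+2 * (w.1^+2 + w.2^+2) by rewrite /sqd /q2 /=; ring.
  lra.
have gy : sqd qq (Y (bar_end b)) < sqd p2 (X (bar_end b)).
  rewrite -(iso_sqd p2 (X (bar_end b)) isb) fb2 fp2.
  have -> : sqd q2 (Y (bar_end b)) = sqd qq (Y (bar_end b)) + 2 * h * (w.1 * (qq.1 - (Y b).1) + w.2 * (qq.2 - (Y b).2)
      - (w.1 * ((Y (bar_end b)).1 - (Y b).1) + w.2 * ((Y (bar_end b)).2 - (Y b).2)))
      + h^+2 * (w.1^+2 + w.2^+2) by rewrite /sqd /q2 /=; ring.
  rewrite hw2 subr0; lra.
have [p [k1 k2 k3 k4]] := kirsz qq h12 h13 h14 h23 h24 h34.
exists p; split.
  apply: (lens_in Ada Ap0).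
    by rewrite -(iso_sqd p0 (X a) isa) fa1.
  by rewrite -(iso_sqd p0 (X (bar_end a)) isa) fa2.
have gp1 : 0 < sqd p2 (X b) - sqd p (X b) by rewrite subr_gt0; apply: le_lt_trans gx.
have gp2 : 0 < sqd p2 (X (bar_end b)) - sqd p (X (bar_end b)).
  by rewrite subr_gt0; apply: le_lt_trans gy.
have [e1 e10 He1] := sqd_near p (X b) gp1.
have [e2 e20 He2] := sqd_near p (X (bar_end b)) gp2.
apply/interiorE; exists (Num.min e1 e2); first by rewrite lt_min e10 e20.
move=> z; rewrite !lt_min => /andP[z1 z1'] /andP[z2 z2'].
apply: (lens_in Adb Ap2).
  by have := He1 z z1 z2; lra.
by have := He2 z z1' z2'; lra.
Qed.
End Alg.
Unset Implicit Arguments.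
Unset Strict Implicit.

Theorem mainTheorem6 (R : realType) (closed : bool) (n : nat)
  (X Y : 'I_n.+1 -> pt R) (A : 'I_n.+1 -> set (pt R))
  (f : 'I_n.+1 -> pt R -> pt R) :
  same_chain closed X Y ->
  expansion closed X Y ->
  (forall i, is_bar closed i ->
     sym_slender_adornment (A i) (X i) (X (bar_end i))) ->
  (forall i, is_bar closed i ->
     [/\ plane_isometry (f i), f i (X i) = Y i & f i (X (bar_end i)) = Y (bar_end i)]) ->
  (forall i j, is_bar closed i -> is_bar closed j -> i != j ->
     ~ overlap (A i) (A j)) ->
  forall i j, is_bar closed i -> is_bar closed j -> i != j ->
     ~ overlap (f i @` A i) (f j @` A j).
Proof.
move=> sc ex Had Hf Hno i j bi bj ij [q [[Fi Ij]|[Fj Ii]]].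
- have [p [Ap Ip]] := main_case sc ex bi bj (Had i bi) (Had j bj) (Hf i bi) (Hf j bj) Fi Ij.
  by apply: (Hno i j bi bj ij); exists p; left.
- have [p [Ap Ip]] := main_case sc ex bj bi (Had j bj) (Had i bi) (Hf j bj) (Hf i bi) Fj Ii.
  by apply: (Hno i j bi bj ij); exists p; right.
Qed.
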